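(* For every integer $n\ge1$, $$\sum_{k=0}^{2n-1}(-1)^k\binom{2n-1}{k}^2H_k=\frac{(-16)^n}{8n\binom{2n}{n}}.$$
   Context: $H_k=\sum_{i=1}^k1/i$ with $H_0=0$. *)

(* Defs.v *)
From mathcomp Require Import all_boot all_order all_algebra.
Set Implicit Arguments. Unset Strict Implicit. Unset Printing Implicit Defensive.
Import Order.TTheory GRing.Theory Num.Theory.
Local Open Scope ring_scope.

Definition harmonic (k : nat) : rat := \sum_(1 <= i < k.+1) (i%:R)^-1.

(* Main.v *)
Require Import Defs.
From mathcomp Require Import all_boot all_order all_algebra.
From mathcomp Require Import ring zify.
Import Order.TTheory GRing.Theory Num.Theory.
Local Open Scope ring_scope.

Lemma sgnB (m k : nat) : odd m -> (k <= m)%N -> (-1) ^+ (m - k) = - (-1) ^+ k :> rat.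
Proof.
move=> hm hk.
rewrite -signr_odd oddB // hm -[in RHS]signr_odd.
by case: (odd k); rewrite /= ?expr0 ?expr1 ?opprK.
Qed.

Lemma sum_rev (m : nat) (F : nat -> rat) :
  \sum_(k < m.+1) F k = \sum_(k < m.+1) F (m - k)%N.
Proof.
rewrite (reindex_inj rev_ord_inj) /=; apply: eq_bigr => k _; by rewrite subSS.
Qed.

Lemma harmonicS k : harmonic k.+1 = harmonic k + (k.+1)%:R^-1.
Proof. by rewrite /harmonic big_nat_recr. Qed.

Lemma sumC2 (m : nat) : odd m ->
  \sum_(k < m.+1) (-1) ^+ k * ('C(m, k)%:R) ^+ 2 = 0 :> rat.
Proof.
move=> hm.
set s := LHS.
have : s = - s.
  rewrite {1}/s (sum_rev m (fun k : nat => (-1) ^+ k * ('C(m, k)%:R) ^+ 2)) /s -sumrN; apply: eq_bigr => k _.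
  rewrite sgnB // ?bin_sub; [ring | exact: leq_ord..].
move=> h; have : 2%:R * s = 0 by rewrite mulr2n mulrDl mul1r {1}h addNr.
by move/eqP; rewrite mulf_eq0 pnatr_eq0 /= => /eqP.
Qed.

Lemma sumC2H (m : nat) : odd m ->
  \sum_(k < m.+1) (-1) ^+ k * ('C(m, k)%:R) ^+ 2 * harmonic (m - k)
  = - \sum_(k < m.+1) (-1) ^+ k * ('C(m, k)%:R) ^+ 2 * harmonic k :> rat.
Proof.
move=> hm.
rewrite (sum_rev m (fun k : nat => (-1) ^+ k * ('C(m, k)%:R) ^+ 2 * harmonic (m - k))) -sumrN; apply: eq_bigr => k _.
rewrite subKn ?leq_ord // sgnB ?leq_ord // bin_sub ?leq_ord //; ring.
Qed.

Lemma coef_XD1 (m i : nat) : (('X + 1 : {poly rat}) ^+ m)`_i = ('C(m, i))%:R.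
Proof.
rewrite exprD1n coef_sum.
under eq_bigr do rewrite coefMn coefXn.
case: (ltnP i m.+1) => hi.
  rewrite (bigD1 (Ordinal hi)) //= eqxx big1 ?addr0 // => j hj.
  suff -> : (i == j :> nat) = false by rewrite mul0rn.
  by apply/negbTE; apply: contra hj => /eqP h; apply/eqP; apply: val_inj; rewrite /= h.
rewrite bin_small // big1 // => j _.
suff -> : (i == j :> nat) = false by rewrite mul0rn.
by apply/negbTE; rewrite neq_ltn (leq_trans (ltn_ord j) hi) orbT.
Qed.

Lemma coef_1BX (m i : nat) : ((1 - 'X : {poly rat}) ^+ m)`_i = (-1) ^+ i * ('C(m, i))%:R.
Proof.
have -> : (1 - 'X : {poly rat}) = (-1)%:P * 'X + 1 by rewrite addrC polyCN mulN1r.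
rewrite exprD1n coef_sum.
under eq_bigr do rewrite exprMn -polyC_exp coefMn coefCM coefXn.
case: (ltnP i m.+1) => hi.
  rewrite (bigD1 (Ordinal hi)) //= eqxx big1 ?addr0 ?mulr1 ?mulr_natr // => j hj.
  suff -> : (i == j :> nat) = false by rewrite mulr0 mul0rn.
  by apply/negbTE; apply: contra hj => /eqP h; apply/eqP; apply: val_inj; rewrite /= h.
rewrite bin_small // mulr0 big1 // => j _.
suff -> : (i == j :> nat) = false by rewrite mulr0 mul0rn.
by apply/negbTE; rewrite neq_ltn (leq_trans (ltn_ord j) hi) orbT.
Qed.

Definition Lg (m : nat) : {poly rat} :=
  \poly_(j < m.+1) (if j == 0%N then 0 else (-1) ^+ j.-1 / j%:R).

Lemma coef_dLg m i : ((Lg m)^`())`_i = if (i < m)%N then (-1) ^+ i else 0.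
Proof.
rewrite coef_deriv coef_poly ltnS /=.
case: ifP => _; last by rewrite mul0rn.
rewrite -mulr_natr; field; by rewrite nat1r pnatr_eq0.
Qed.

Lemma dLg m : odd m -> ('X + 1) * (Lg m)^`() = 1 + 'X^m.
Proof.
move=> hm; apply/polyP => i.
rewrite mulrDl mul1r !coefD coefXM !coef_dLg coef1 coefXn.
case: i => [|i] /=.
  have m0 : (0 < m)%N by case: m hm.
  by rewrite m0 expr0 add0r; case: eqP => // h; rewrite -h in hm.
case: (ltngtP i.+1 m) => h.
- by rewrite exprS mulN1r addrN add0r.
- by rewrite !add0r.
- rewrite addr0 add0r -signr_odd; move: hm; rewrite -h /= => /negPf ->.
  by rewrite expr0.
Qed.

Definition f (m : nat) : {poly rat} := ('X + 1) ^+ m * Lg m.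

Lemma ode m : odd m ->
  ('X + 1) * (f m)^`() = (f m) *+ m + ('X + 1) ^+ m * (1 + 'X^m).
Proof.
move=> hm.
have m0 : (0 < m)%N by case: m hm.
rewrite /f derivM deriv_exp derivD derivX derivC addr0 mul1r mulrDr.
rewrite -(dLg m hm).
have e1 : ('X + 1 : {poly rat}) ^+ m = ('X + 1) * ('X + 1) ^+ m.-1 by rewrite -exprS prednK.
rewrite e1; ring.
Qed.

Lemma ode_coef m k : odd m -> (k < m)%N ->
  (if k == 0%N then 0 else (f m)`_k *+ k) + (f m)`_k.+1 *+ k.+1
  = (f m)`_k *+ m + ('C(m, k))%:R.
Proof.
move=> hm hk.
have := congr1 (fun p : {poly rat} => p`_k) (ode m hm).
rewrite mulrDl mul1r coefD coefXM !coef_deriv.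
rewrite coefD coefMn mulrDr coefD coefMXn hk addr0 mulr1 coef_XD1.
by case: k hk.
Qed.

Lemma coef_f m k : odd m -> (k <= m)%N ->
  (f m)`_k = ('C(m, k))%:R * (harmonic m - harmonic (m - k)).
Proof.
move=> hm; elim: k => [|k IH] hk.
  by rewrite subn0 subrr mulr0 /f coefM big_ord1 sub0n /Lg coef_poly ltn0Sn eqxx mulr0.
have hk' : (k < m)%N by [].
have h := ode_coef m k hm hk'.
have h2 : (f m)`_k.+1 * (k.+1)%:R = (f m)`_k * (m - k)%:R + ('C(m, k))%:R.
  have e0 : (if k == 0%N then (0 : rat) else (f m)`_k *+ k) = (f m)`_k *+ k.
    by case: eqP => [->|]; rewrite ?mulr0n.
  rewrite e0 -(mulr_natr _ k) -(mulr_natr _ k.+1) -(mulr_natr _ m) in h.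
  rewrite natrB; last exact: ltnW.
  have -> : (f m)`_k * (m%:R - k%:R) + ('C(m, k))%:R
    = ((f m)`_k * m%:R + ('C(m, k))%:R) - (f m)`_k * k%:R by ring.
  rewrite -h; ring.
have e : harmonic (m - k) = harmonic (m - k.+1) + (m - k)%:R^-1.
  by rewrite -(subnSK hk) harmonicS.
have hb : (k.+1 * 'C(m, k.+1) = (m - k) * 'C(m, k))%N by rewrite mul_bin_left.
have hk1 : (k.+1)%:R != 0 :> rat by rewrite pnatr_eq0.
have hb' : ('C(m, k.+1))%:R = (m - k)%:R * ('C(m, k))%:R / (k.+1)%:R :> rat.
  by rewrite -natrM -hb natrM mulrAC divff // mul1r.
have hmk : (m - k)%:R != 0 :> rat by rewrite pnatr_eq0 subn_eq0 -ltnNge.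
have hF : (f m)`_k.+1 = ((f m)`_k * (m - k)%:R + ('C(m, k))%:R) / (k.+1)%:R.
  by rewrite -h2 mulfK.
rewrite hF IH; last exact: ltnW.
rewrite e hb'.
field.
by rewrite nat1r hk1 hmk.
Qed.

Definition Ssum (m : nat) : rat :=
  \sum_(k < m.+1) (-1) ^+ k * ('C(m, k)%:R) ^+ 2 * harmonic k.

Lemma Ssum_f m : odd m -> Ssum m = \sum_(k < m.+1) (-1) ^+ k * ('C(m, k))%:R * (f m)`_k.
Proof.
move=> hm.
have -> : \sum_(k < m.+1) (-1) ^+ k * ('C(m, k))%:R * (f m)`_k =
  \sum_(k < m.+1) ((-1) ^+ k * ('C(m, k)%:R) ^+ 2 * harmonic m
     - (-1) ^+ k * ('C(m, k)%:R) ^+ 2 * harmonic (m - k)).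
  apply: eq_bigr => k _; rewrite coef_f //; last exact: leq_ord.
  ring.
rewrite sumrB -mulr_suml sumC2 // mul0r sumC2H // /Ssum; ring.
Qed.

Lemma f_P m : odd m ->
  \sum_(k < m.+1) (-1) ^+ k * ('C(m, k))%:R * (f m)`_k
  = - ((1 - 'X) ^+ m * f m)`_m.
Proof.
move=> hm.
rewrite coefM.
under [in RHS]eq_bigr do rewrite coef_1BX.
rewrite (sum_rev m (fun j : nat => (-1) ^+ j * ('C(m, j))%:R * (f m)`_(m - j))).
rewrite -sumrN; apply: eq_bigr => k _.
rewrite subKn; last exact: leq_ord.
rewrite sgnB //; last exact: leq_ord.
rewrite bin_sub; last exact: leq_ord.
ring.
Qed.

Lemma Pform m : (1 - 'X) ^+ m * f m =
  \sum_(l < m.+1) (((-1) ^+ l * ('C(m, l))%:R) *: ('X^(2 * l) * Lg m)).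
Proof.
rewrite /f mulrA -exprMn.
have -> : ((1 - 'X) * ('X + 1) : {poly rat}) = - 'X ^+ 2 + 1 by ring.
rewrite exprD1n mulr_suml; apply: eq_bigr => l _.
rewrite -mul_polyC polyCM polyC_exp polyCN polyC1 polyC_natr.
rewrite exprNn -exprM mulrnAl -mulr_natr; ring.
Qed.

Lemma coefP m : ((1 - 'X) ^+ m * f m)`_m =
  \sum_(l < m.+1) (-1) ^+ l * ('C(m, l))%:R * (if (m < 2 * l)%N then 0 else (Lg m)`_(m - 2 * l)).
Proof.
rewrite Pform coef_sum; apply: eq_bigr => l _.
by rewrite coefZ coefXnM.
Qed.

Lemma nz m l : odd m -> m%:R - 2 * l%:R != 0 :> rat.
Proof.
move=> hm; rewrite subr_eq0 -natrM eqr_nat; apply/eqP => h.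
by move: hm; rewrite h mul2n odd_double.
Qed.

Lemma Lg_odd m l : odd m -> (2 * l <= m)%N ->
  (Lg m)`_(m - 2 * l) = (m%:R - 2 * l%:R)^-1.
Proof.
move=> hm hl.
have [p hp] : exists p, m = (2 * p).+1.
  exists m./2; rewrite -[LHS](odd_double_half m) hm; lia.
rewrite /Lg coef_poly.
have -> : (m - 2 * l < m.+1)%N by lia.
have -> : (m - 2 * l == 0)%N = false by apply/eqP; lia.
have -> : ((m - 2 * l).-1 = 2 * (p - l))%N by lia.
by rewrite mulnC exprM sqrr_sign mul1r natrB // natrM.
Qed.

Definition u (m l : nat) : rat := (-1) ^+ l * ('C(m, l))%:R / (m%:R - 2 * l%:R).

Lemma coefP_u m : odd m -> ((1 - 'X) ^+ m * f m)`_m =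
  \sum_(l < m.+1) (if (m < 2 * l)%N then 0 else u m l).
Proof.
move=> hm; rewrite coefP; apply: eq_bigr => l _.
case: ifP => h; first by rewrite mulr0.
by rewrite Lg_odd // leqNgt h.
Qed.

Lemma W_half m : odd m -> \sum_(l < m.+1) u m l =
  2 * \sum_(l < m.+1) (if (m < 2 * l)%N then 0 else u m l).
Proof.
move=> hm.
have e : \sum_(l < m.+1) u m l = \sum_(l < m.+1) (if (m < 2 * l)%N then 0 else u m l)
   + \sum_(l < m.+1) (if (m < 2 * l)%N then u m l else 0).
  rewrite -big_split; apply: eq_bigr => l _ /=; case: ifP => _; by rewrite ?add0r ?addr0.
rewrite e.
rewrite (sum_rev m (fun l : nat => if (m < 2 * l)%N then u m l else 0)).
have -> : \sum_(l < m.+1) (if (m < 2 * (m - l))%N then u m (m - l) else 0)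
   = \sum_(l < m.+1) (if (m < 2 * l)%N then 0 else u m l).
  apply: eq_bigr => l _.
  have hl : (l <= m)%N by exact: leq_ord.
  have [p hp] : exists p, m = (2 * p).+1.
    exists m./2; rewrite -[LHS](odd_double_half m) hm; lia.
  have -> : (m < 2 * (m - l))%N = ~~ (m < 2 * l)%N.
    apply/idP/idP; rewrite -leqNgt; lia.
  case: (m < 2 * l)%N => //=.
  rewrite /u sgnB // bin_sub // natrB //.
  have := nz m l hm; move=> hz.
  have hz' : m%:R - 2 * (m%:R - l%:R) != 0 :> rat.
    have -> : m%:R - 2 * (m%:R - l%:R) = - (m%:R - 2 * l%:R) :> rat by ring.
    by rewrite oppr_eq0.
  field.
  by rewrite hz hz'.
ring.
Qed.

Lemma prod_nz (b : rat) n : (forall i, (i < n)%N -> b + i%:R != 0) ->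
  \prod_(0 <= i < n) (b + i%:R) != 0.
Proof.
elim: n => [|n IH] h; first by rewrite big_geq // oner_eq0.
rewrite big_nat_recr //= mulf_neq0 //; first by apply: IH => i hi; apply: h; exact: ltnW.
exact: h.
Qed.

Lemma PF (m : nat) (a : rat) : (forall i, (i <= m)%N -> a + i%:R != 0) ->
  \sum_(0 <= j < m.+1) (-1) ^+ j * ('C(m, j))%:R / (a + j%:R)
  = (m`!)%:R / \prod_(0 <= i < m.+1) (a + i%:R).
Proof.
elim: m a => [|m IH] a ha.
  by rewrite !big_nat1 expr0 mul1r bin0 fact0.
have e1 : \sum_(0 <= j < m.+2) (-1) ^+ j * ('C(m.+1, j))%:R / (a + j%:R)
  = \sum_(0 <= j < m.+1) (-1) ^+ j * ('C(m, j))%:R / (a + j%:R)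
    - \sum_(0 <= j < m.+1) (-1) ^+ j * ('C(m, j))%:R / ((a + 1) + j%:R).
  rewrite big_nat_recl // [in X in _ = X - _]big_nat_recl //.
  have -> : \sum_(0 <= i < m.+1) (-1) ^+ i.+1 * ('C(m.+1, i.+1))%:R / (a + (i.+1)%:R)
    = \sum_(0 <= i < m.+1) (-1) ^+ i.+1 * ('C(m, i.+1))%:R / (a + (i.+1)%:R)
      - \sum_(0 <= j < m.+1) (-1) ^+ j * ('C(m, j))%:R / ((a + 1) + j%:R).
    rewrite -sumrB; apply: eq_bigr => i _ /=.
    rewrite binS natrD -natr1 exprS (addrC (i%:R) 1) addrA; ring.
  rewrite (big_nat_recr m) //= (bin_small (ltnSn m)) mulr0 mul0r addr0.
  rewrite !bin0; ring.
have hS : forall i : nat, a + 1 + i%:R = a + (i.+1)%:R.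
  by move=> i; rewrite -natr1; ring.
rewrite e1 (IH a (fun i hi => ha i (leqW hi))).
rewrite (IH (a + 1)); last by move=> i hi; rewrite hS; exact: (ha i.+1 hi).
set Q := \prod_(0 <= i < m) (a + 1 + i%:R).
have hP1 : \prod_(0 <= i < m.+1) (a + i%:R) = a * Q.
  rewrite big_nat_recl // addr0; congr (_ * _).
  by apply: eq_bigr => i _; rewrite hS.
have hP2 : \prod_(0 <= i < m.+1) (a + 1 + i%:R) = Q * (a + 1 + m%:R).
  by rewrite big_nat_recr.
have hP3 : \prod_(0 <= i < m.+2) (a + i%:R) = a * (Q * (a + 1 + m%:R)).
  rewrite big_nat_recl // addr0 -hP2; congr (_ * _).
  by apply: eq_bigr => i _; rewrite hS.
have ha0 : a != 0 by have := ha 0%N isT; rewrite addr0.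
have hQ : Q != 0 by apply: prod_nz => i hi; rewrite hS; exact: (ha i.+1 (ltnW hi)).
have hm1 : a + 1 + m%:R != 0 by rewrite hS; exact: (ha m.+1 (leqnn _)).
rewrite hP1 hP2 hP3 factS natrM.
field.
by rewrite ha0 hQ hm1.
Qed.

Lemma Tval p : \prod_(0 <= i < (2 * p).+2) (- (((2 * p).+1)%:R / 2) + i%:R : rat)
  = (-1) ^+ p.+1 * ((((2 * p).+2)`!)%:R) ^+ 2 / (16 ^+ p.+1 * (((p.+1)`!)%:R) ^+ 2).
Proof.
elim: p => [|p IH].
  rewrite big_nat_recr //= big_nat1.
  have -> : (2 * 0).+2 = 2%N by [].
  rewrite (_ : 2`! = 2%N) // (_ : 1`! = 1%N) //.
have -> : (2 * p.+1).+2 = ((2 * p).+2).+2 by lia.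
rewrite big_nat_recl // big_nat_recr //=.
have -> : \prod_(0 <= i < (2 * p).+2) (- (((2 * p.+1).+1)%:R / 2) + (i.+1)%:R : rat)
   = \prod_(0 <= i < (2 * p).+2) (- (((2 * p).+1)%:R / 2) + i%:R : rat).
  apply: eq_bigr => i _.
  have -> : (2 * p.+1).+1 = ((2 * p).+1).+2 by lia.
  by rewrite -!natr1; field.

rewrite IH.
have c1 : ((2 * p.+1).+1)%:R = 2 * p%:R + 3 :> rat.
  have e : ((2 * p.+1).+1 = p + p + 3)%N by lia.
  rewrite e !natrD; ring.
have c2 : ((2 * p).+3)%:R = 2 * p%:R + 3 :> rat.
  have e : ((2 * p).+3 = p + p + 3)%N by lia.
  rewrite e !natrD; ring.
have c3 : ((2 * p).+4)`!%:R = (2 * p%:R + 4) * (2 * p%:R + 3) * ((2 * p).+2)`!%:R :> rat.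
  rewrite !factS !natrM mulrA.
  have e : ((2 * p).+4 = p + p + 4)%N by lia.
  have e' : ((2 * p).+3 = p + p + 3)%N by lia.
  rewrite e e' !natrD; ring.
have c4 : (p.+2)`!%:R = (p%:R + 2) * (p.+1)`!%:R :> rat.
  rewrite factS natrM.
  have e : (p.+2 = p + 2)%N by lia.
  rewrite e !natrD; ring.
rewrite c1 c2 c3 c4.
have h1 : ((2 * p).+2)`!%:R != 0 :> rat by rewrite pnatr_eq0 -lt0n fact_gt0.
have h2 : (p.+1)`!%:R != 0 :> rat by rewrite pnatr_eq0 -lt0n fact_gt0.
have h3 : p%:R + 2 != 0 :> rat.
  have -> : p%:R + 2 = (p + 2)%:R :> rat by rewrite natrD.
  by rewrite pnatr_eq0 addn2.
rewrite (exprS _ p.+1) (exprS _ p.+1).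
field.
by rewrite h2 h3 expf_neq0.
Qed.

Lemma ha_l m i : odd m -> - (m%:R / 2) + i%:R != 0 :> rat.
Proof.
move=> hm; have := nz m i hm.
have -> : - (m%:R / 2) + i%:R = - (m%:R - 2 * i%:R) / 2 :> rat by field.
by move=> h; rewrite mulf_neq0 // ?oppr_eq0 // invr_eq0.
Qed.

Lemma W_PF m : odd m ->
  \sum_(l < m.+1) u m l = - (1 / 2) * ((m`!)%:R / \prod_(0 <= i < m.+1) (- (m%:R / 2) + i%:R)).
Proof.
move=> hm.
have ha : forall i, (i <= m)%N -> - (m%:R / 2) + i%:R != 0 :> rat.
  move=> i _; have := nz m i hm.
  have -> : - (m%:R / 2) + i%:R = - (m%:R - 2 * i%:R) / 2 :> rat by field.
  by move=> h; rewrite mulf_neq0 // ?oppr_eq0 // invr_eq0.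
rewrite -(PF m _ ha) big_mkord mulr_sumr; apply: eq_bigr => l _.
rewrite /u.
have h1 := ha l (leq_ord l).
have h2 := nz m l hm.
have -> : m%:R - 2 * l%:R = - 2 * (- (m%:R / 2) + l%:R) :> rat by field.
field.
have -> : (1 *- m + l%:R * 2 : rat) = - (m%:R - 2 * l%:R) by rewrite -mulr_natr; ring.
by rewrite oppr_eq0.
Qed.

Lemma S_val m : odd m ->
  Ssum m = (1 / 4) * ((m`!)%:R / \prod_(0 <= i < m.+1) (- (m%:R / 2) + i%:R)).
Proof.
move=> hm.
rewrite Ssum_f // f_P // coefP_u //.
have := W_half m hm; rewrite W_PF // => h.
have -> : \sum_(l < m.+1) (if (m < 2 * l)%N then 0 else u m l)
  = (- (1 / 2) * ((m`!)%:R / \prod_(0 <= i < m.+1) (- (m%:R / 2) + i%:R))) / 2.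
  by rewrite h; field.
have hP : \prod_(0 <= i < m.+1) (- (m%:R / 2) + i%:R) != 0 :> rat.
  by apply: prod_nz => i _; apply: ha_l.
field.
by [].
Qed.

Theorem mainTheorem9 (n : nat) (hn : (1 <= n)%N) :
  \sum_(0 <= k < (2 * n - 1).+1)
     (-1) ^+ k * ('C(2 * n - 1, k)%:R) ^+ 2 * harmonic k
  = ((-16) ^+ n : rat) / (8 * n%:R * ('C(2 * n, n))%:R).
Proof.
case: n hn => // p _.
have e : (2 * p.+1 - 1 = (2 * p).+1)%N by lia.
rewrite e big_mkord.
have hm : odd (2 * p).+1 by rewrite /= mul2n odd_double.
have := S_val _ hm; rewrite /Ssum => ->.
have e2 : ((2 * p).+1).+1 = (2 * p).+2 by [].
rewrite Tval.
have hb := bin_fact (leq_addl p.+1 p.+1).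
rewrite (_ : (p.+1 + p.+1 - p.+1 = p.+1)%N) in hb; last by rewrite addnK.
rewrite (_ : (p.+1 + p.+1 = 2 * p.+1)%N) in hb; last by lia.
have hF : (2 * p.+1)`!%:R = ((2 * p).+2)%:R * ((2 * p).+1)`!%:R :> rat.
  by rewrite (_ : (2 * p.+1 = (2 * p).+2)%N) ?factS ?natrM //; lia.
have hC : ('C(2 * p.+1, p.+1))%:R = (2 * p.+1)`!%:R / ((p.+1)`!%:R ^+ 2) :> rat.
  have hG : (p.+1)`!%:R != 0 :> rat by rewrite pnatr_eq0 -lt0n fact_gt0.
  have hb' : ('C(2 * p.+1, p.+1))%:R * ((p.+1)`!%:R * (p.+1)`!%:R) = (2 * p.+1)`!%:R :> rat.
    by rewrite -!natrM hb.
  by rewrite -hb' expr2 mulfK // mulf_neq0.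
rewrite hC.
rewrite (_ : (2 * p).+2 = 2 * p.+1)%N; last by lia.
rewrite hF.
set G := (p.+1)`!%:R.
set F1 := ((2 * p).+1)`!%:R.
have hG : G != 0 by rewrite pnatr_eq0 -lt0n fact_gt0.
have hF1 : F1 != 0 by rewrite pnatr_eq0 -lt0n fact_gt0.
have hp : (p.+1)%:R != 0 :> rat by rewrite pnatr_eq0.
have e16 : (-16 : rat) ^+ p.+1 = (-1) ^+ p.+1 * 16 ^+ p.+1 by rewrite -exprMn mulN1r.
rewrite e16.
have h16 : (16 : rat) ^+ p.+1 != 0 by rewrite expf_neq0.
have hq : 2 + 2 * p%:R != 0 :> rat.
  have -> : (2 + 2 * p%:R : rat) = 2 * (p.+1)%:R by rewrite -natr1; ring.
  by rewrite mulf_neq0.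
rewrite -signr_odd; case: (odd p.+1); rewrite ?expr0 ?expr1.
  field.
  by rewrite -[(p.+1)`!%:R]/G -[((2 * p).+1)`!%:R]/F1 hG hF1 hq nat1r hp h16.
field.
by rewrite -[(p.+1)`!%:R]/G -[((2 * p).+1)`!%:R]/F1 hG hF1 hq nat1r hp h16.
Qed.
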